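(* Let $R$ be a commutative ring and $M$ an $R$-module. The following are equivalent: (1) $M$ is a finitely presented $R$-module; (2) $M$ is $u$-$(R\setminus\mathfrak p)$-finitely presented for every prime ideal $\mathfrak p$ of $R$; (3) $M$ is $u$-$(R\setminus\mathfrak m)$-finitely presented for every maximal ideal $\mathfrak m$ of $R$.
   Context: For a multiplicative subset $S$ of $R$ (containing $1$, closed under products), an $R$-module $M$ is $u$-$S$-finitely presented if there are $s\in S$ and an exact sequence $0\to T_1\to F\to M\to T_2\to 0$ with $F$ finitely presented and $sT_1=sT_2=0$. *)

(* Defs.v *)
From HB Require Import structures.
From mathcomp Require Import all_boot all_algebra.
Set Implicit Arguments. Unset Strict Implicit. Unset Printing Implicit Defensive.
Import GRing.Theory.
Local Open Scope ring_scope.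

Section Defs.
Variable R : comPzRingType.

Definition is_ideal (I : R -> Prop) : Prop :=
  [/\ I 0, (forall x y, I x -> I y -> I (x + y)) & (forall a x, I x -> I (a * x))].

Definition prime_ideal (P : R -> Prop) : Prop :=
  [/\ is_ideal P, ~ P 1 & (forall a b, P (a * b) -> P a \/ P b)].

Definition maximal_ideal (Mx : R -> Prop) : Prop :=
  [/\ is_ideal Mx, ~ Mx 1 &
     (forall J : R -> Prop, is_ideal J -> (forall x, Mx x -> J x) ->
        (forall x, J x -> Mx x) \/ J 1)].

Definition exact_at (A B C : zmodType) (f : A -> B) (g : B -> C) : Prop :=
  forall y, g y = 0 <-> exists x, f x = y.

Definition fin_presented (M : lmodType R) : Prop :=
  exists (n m : nat) (g : {linear 'rV[R]_m -> 'rV[R]_n}) (f : {linear 'rV[R]_n -> M}),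
    exact_at g f /\ (forall y : M, exists x, f x = y).

Definition u_fin_presented (S : R -> Prop) (M : lmodType R) : Prop :=
  exists (s : R) (T1 F T2 : lmodType R)
         (i : {linear T1 -> F}) (h : {linear F -> M}) (p : {linear M -> T2}),
    S s /\ fin_presented F /\
    (forall t, i t = 0 -> t = 0) /\
    exact_at i h /\ exact_at h p /\
    (forall z : T2, exists y, p y = z) /\
    (forall t : T1, s *: t = 0) /\
    (forall t : T2, s *: t = 0).

End Defs.

(* Main.v *)
Require Import Defs.
From HB Require Import structures.
From mathcomp Require Import all_boot all_algebra.
From mathcomp Require boolp classical_sets.
From Stdlib Require Import Classical.
Set Implicit Arguments. Unset Strict Implicit. Unset Printing Implicit Defensive.
Import GRing.Theory.
Local Open Scope ring_scope.

Section Comb.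
Variables (R : comPzRingType) (V : lmodType R) (n : nat) (v : 'I_n -> V).
Definition combf (x : 'rV[R]_n) : V := \sum_j x 0 j *: v j.
Lemma combf_linear : linear combf.
Proof.
move=> a x y; rewrite /combf scaler_sumr -big_split; apply: eq_bigr => j _.
by rewrite !mxE scalerDl scalerA.
Qed.
HB.instance Definition _ := GRing.isLinear.Build R 'rV[R]_n V *:%R combf combf_linear.
Lemma combf_delta j : combf (delta_mx 0 j) = v j.
Proof.
rewrite /combf (bigD1 j) //= mxE !eqxx scale1r big1 ?addr0 // => i /negbTE ij.
by rewrite mxE ij andbF scale0r.
Qed.
End Comb.

Section Zero.
Variables (R : comPzRingType) (U V : lmodType R).
Definition zerof (x : U) : V := 0.
Lemma zerof_linear : linear zerof.
Proof. by move=> a x y; rewrite /zerof scaler0 addr0. Qed.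
HB.instance Definition _ := GRing.isLinear.Build R U V *:%R zerof zerof_linear.
End Zero.

Section Span.
Variables (R : comPzRingType).

Lemma lin_delta (V : lmodType R) n (L : {linear 'rV[R]_n -> V}) x :
  L x = \sum_j x 0 j *: L (delta_mx 0 j).
Proof.
by rewrite {1}(row_sum_delta x) linear_sum; apply: eq_bigr => j _; rewrite linearZ.
Qed.

Fixpoint spn (V : lmodType R) (vs : seq V) (y : V) : Prop :=
  match vs with
  | [::] => y = 0
  | v :: vs' => exists c z, spn vs' z /\ y = c *: v + z
  end.

Variable V : lmodType R.

Lemma spn0 (vs : seq V) : spn vs 0.
Proof. by elim: vs => [|v vs IH] //=; exists 0, 0; rewrite scale0r addr0. Qed.

Lemma spnD (vs : seq V) a b : spn vs a -> spn vs b -> spn vs (a + b).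
Proof.
elim: vs a b => [|v vs IH] a b /=; first by move=> -> ->; rewrite addr0.
move=> [c1 [z1 [s1 ->]]] [c2 [z2 [s2 ->]]]; exists (c1 + c2), (z1 + z2).
split; first exact: IH.
by rewrite scalerDl -!addrA; congr (_ + _); rewrite addrCA.
Qed.

Lemma spnZ (vs : seq V) a y : spn vs y -> spn vs (a *: y).
Proof.
elim: vs y => [|v vs IH] y /=; first by move=> ->; rewrite scaler0.
move=> [c [z [s ->]]]; exists (a * c), (a *: z); split; first exact: IH.
by rewrite scalerDr scalerA.
Qed.

Lemma spn_cat (a b : seq V) y :
  spn (a ++ b) y <-> exists y1 y2, spn a y1 /\ spn b y2 /\ y = y1 + y2.
Proof.
elim: a y => [|v a IH] y /=.
  split; first by move=> H; exists 0, y; rewrite add0r.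
  by move=> [y1 [y2 [-> [H ->]]]]; rewrite add0r.
split.
  move=> [c [z [/IH [y1 [y2 [s1 [s2 ->]]]] ->]]].
  exists (c *: v + y1), y2; split; first by exists c, y1.
  by split=> //; rewrite addrA.
move=> [y1 [y2 [[c [z [s ->]]] [s2 ->]]]]; exists c, (z + y2); split.
  by apply/IH; exists z, y2.
by rewrite addrA.
Qed.

Lemma spn_sum (I : Type) (r : seq I) (g : I -> V) (c : I -> R) :
  spn (map g r) (\sum_(j <- r) c j *: g j).
Proof.
elim: r => [|j r IH] /=; first by rewrite big_nil.
by rewrite big_cons; exists (c j), (\sum_(j <- r) c j *: g j).
Qed.

Lemma spn_combf (vs : seq V) y :
  spn vs y <-> exists x : 'rV[R]_(size vs), combf (fun j : 'I_(size vs) => vs`_j) x = y.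
Proof.
elim: vs y => [|v vs IH] y /=.
  by split; [move=> ->; exists 0; rewrite /combf big_ord0 | move=> [x <-]; rewrite /combf big_ord0].
split.
  move=> [c [z [/IH [x <-] ->]]].
  exists (\row_(j < (size vs).+1) (if unlift ord0 j is Some k then x 0 k else c)).
  rewrite /combf big_ord_recl /= mxE unlift_none; congr (_ + _); apply: eq_bigr => i _.
  by rewrite mxE liftK.
move=> [x <-]; rewrite /combf big_ord_recl; exists (x 0 ord0).
exists (\sum_(i < size vs) x 0 (lift ord0 i) *: vs`_i); split=> //.
apply/IH; exists (\row_i x 0 (lift ord0 i)); apply: eq_bigr => i _; by rewrite mxE.
Qed.

End Span.

Section Ideals.
Variable R : comPzRingType.

Lemma max_prime (Mx : R -> Prop) : maximal_ideal Mx -> prime_ideal Mx.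
Proof.
move=> [[I0 ID IM] n1 mx]; split=> // a b ab.
case: (classic (Mx a)) => Ha; [by left | right].
pose J x := exists m r, Mx m /\ x = m + r * a.
have IJ : is_ideal J.
  split; first by exists 0, 0; rewrite mul0r addr0.
    move=> x y [m1 [r1 [h1 ->]]] [m2 [r2 [h2 ->]]].
    exists (m1 + m2), (r1 + r2); split; first exact: ID.
    by rewrite mulrDl addrACA.
  move=> c x [m [r [h ->]]]; exists (c * m), (c * r); split; first exact: IM.
  by rewrite mulrDr mulrA.
case: (mx J IJ) => [x Mxx|JM|].
- by exists x, 0; rewrite mul0r addr0.
- by case: Ha; apply: JM; exists 0, 1; rewrite add0r mul1r.
move=> [m [r [h e]]].
have -> : b = b * m + r * (a * b).
  by rewrite -[b in LHS]mulr1 e mulrDr; congr (_ + _); rewrite mulrCA [b * a]mulrC.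
by apply: ID; apply: IM.
Qed.

Lemma exists_max (H : R -> Prop) : is_ideal H -> ~ H 1 ->
  exists Mx, maximal_ideal Mx /\ (forall x, H x -> Mx x).
Proof.
move=> IH H1.
pose T := {I : R -> Prop | is_ideal I /\ (forall x, H x -> I x) /\ ~ I 1}.
pose t0 : T := exist _ H (conj IH (conj (fun x h => h) H1)).
pose Rl (A B : T) := boolp.asbool (forall x, sval A x -> sval B x).
have [] := @classical_sets.ZL_preorder T t0 Rl.
- by move=> t; apply/boolp.asboolP.
- by move=> r s t /boolp.asboolP rs /boolp.asboolP st; apply/boolp.asboolP => x /rs /st.
- move=> A tot.
  pose U x := H x \/ exists I : T, A I /\ sval I x.
  have UI : is_ideal U.
    have [H0 HD HM] := IH.
    split; first by left.
      move=> x y [hx|[I [AI Ix]]] [hy|[J [AJ Jy]]].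
      + by left; apply: HD.
      + case: (svalP J) => [[_ JD _] [HJ _]].
        by right; exists J; split=> //; apply: JD => //; apply: HJ.
      + case: (svalP I) => [[_ ID _] [HI _]].
        by right; exists I; split=> //; apply: ID => //; apply: HI.
      + case: (tot I J AI AJ) => /boolp.asboolP sub.
          case: (svalP J) => [[_ JD _] _].
          by right; exists J; split=> //; apply: JD => //; apply: sub.
        case: (svalP I) => [[_ ID _] _].
        by right; exists I; split=> //; apply: ID => //; apply: sub.
    move=> a x [hx|[I [AI Ix]]]; first by left; apply: HM.
    case: (svalP I) => [[_ _ IM] _].
    by right; exists I; split=> //; apply: IM.
  have U1 : ~ U 1.
    by move=> [//|[I [_ I1]]]; case: (svalP I) => _ [_]; apply.
  exists (exist _ U (conj UI (conj (fun x h => or_introl h) U1))) => s As.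
  by apply/boolp.asboolP => x sx /=; right; exists s.
move=> t tmax; exists (sval t); case: (svalP t) => It [Ht t1].
split=> //; split=> // J IJ tJ.
case: (classic (J 1)) => J1; [by right | left].
pose j : T := exist _ J (conj IJ (conj (fun x h => tJ x (Ht x h)) J1)).
have /tmax /boolp.asboolP : Rl t j by apply/boolp.asboolP.
by [].
Qed.

Lemma key_ideal (H : R -> Prop) : is_ideal H ->
  (forall Mx, maximal_ideal Mx -> exists s, ~ Mx s /\ H (s * s)) -> H 1.
Proof.
move=> IH hyp; case: (classic (H 1)) => // H1.
have [Mx [mMx HM]] := exists_max IH H1.
have [s [ns Hs]] := hyp Mx mMx.
have [_ _ pr] := max_prime mMx.
by case: (pr s s (HM _ Hs)).
Qed.

End Ideals.

Section Main.
Variable R : comPzRingType.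

Lemma spn_map_ker (V W : lmodType R) (L : {linear V -> W}) (I : Type)
  (g : I -> V) (r : seq I) y :
  (forall j, L (g j) = 0) -> spn (map g r) y -> L y = 0.
Proof.
move=> h0; elim: r y => [|j r IH] y /=; first by move=> ->; rewrite linear0.
by move=> [c [z [s ->]]]; rewrite linearD linearZ_LR h0 (IH _ s) scaler0 addr0.
Qed.

Lemma spn_sum_ord (V : lmodType R) n (g : 'I_n -> V) (c : 'I_n -> R) :
  spn (map g (index_enum 'I_n)) (\sum_(j < n) c j *: g j).
Proof. exact: spn_sum. Qed.

Lemma back (M : lmodType R) :
  (forall Mx, maximal_ideal Mx -> u_fin_presented (fun r => ~ Mx r) M) ->
  fin_presented M.
Proof.
move=> hyp.
pose H0 t := exists vs : seq M, forall y, spn vs (t *: y).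
have I0 : is_ideal H0.
  split.
  - by exists [::] => y; rewrite scale0r.
  - move=> a b [v1 h1] [v2 h2]; exists (v1 ++ v2) => y; apply/spn_cat.
    by exists (a *: y), (b *: y); rewrite scalerDl.
  - by move=> a t [vs h]; exists vs => y; rewrite mulrC -scalerA; exact: h.
have [vs vsP] : H0 1.
  refine (key_ideal I0 _) => Mx mMx.
  have [s [T1 [F [T2 [i [h [p [ns [[np [mp [gF [fF [exF surF]]]]]
    [inj [exih [exhp [surp [k1 k2]]]]]]]]]]]]]] := hyp Mx mMx.
  exists s; split=> //.
  have [_ _ HM] := I0; apply: HM.
  exists (map (fun j => h (fF (delta_mx 0 j))) (index_enum 'I_np)) => y.
  have : p (s *: y) = 0 by rewrite linearZ_LR k2.
  move=> /exhp [z hz]; have [x fx] := surF z.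
  rewrite -hz -fx.
  have -> : h (fF x) = (h \o fF) x by [].
  rewrite (lin_delta (h \o fF)).
  exact: (spn_sum_ord (fun j => h (fF (delta_mx 0 j))) (fun j => x 0 j)).
pose n := size vs.
pose phi : {linear 'rV[R]_n -> M} := combf (fun j : 'I_n => vs`_j).
have phiS : forall y, exists x, phi x = y.
  move=> y; have := vsP y; rewrite scale1r => /spn_combf [x hx]; by exists x.
pose H1 t := exists ws : seq 'rV[R]_n, (forall y, spn ws y -> phi y = 0) /\
  (forall x, phi x = 0 -> spn ws (t *: x)).
have I1 : is_ideal H1.
  split.
  - exists [::]; split; first by move=> y /= ->; rewrite linear0.
    by move=> x _ /=; rewrite scale0r.
  - move=> a b [w1 [k1 h1]] [w2 [k2 h2]]; exists (w1 ++ w2); split.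
      by move=> y /spn_cat [y1 [y2 [s1 [s2 ->]]]]; rewrite linearD (k1 _ s1) (k2 _ s2) addr0.
    move=> x x0; apply/spn_cat.
    by exists (a *: x), (b *: x); rewrite scalerDl; split; [apply: h1|split; [apply: h2|]].
  - move=> a t [ws [k h]]; exists ws; split=> // x x0.
    by rewrite -scalerA; apply: spnZ; apply: h.
have [ws [wsK wsP]] : H1 1.
  refine (key_ideal I1 _) => Mx mMx.
  have [s [T1 [F [T2 [i [h [p [ns [[np [mp [gF [fF [exF surF]]]]]
    [inj [exih [exhp [surp [k1 k2]]]]]]]]]]]]]] := hyp Mx mMx.
  exists s; split=> //.
  have ha : forall j : 'I_n, exists a, h (fF a) = s *: vs`_j.
    move=> j; have : p (s *: vs`_j) = 0 by rewrite linearZ_LR k2.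
    by move=> /exhp [z hz]; have [x fx] := surF z; exists x; rewrite fx.
  pose fa j := sval (boolp.cid (ha j)).
  have faP j : h (fF (fa j)) = s *: vs`_j := svalP (boolp.cid (ha j)).
  have hb : forall k : 'I_np, exists b, phi b = h (fF (delta_mx 0 k)) by move=> k; apply: phiS.
  pose fb k := sval (boolp.cid (hb k)).
  have fbP k : phi (fb k) = h (fF (delta_mx 0 k)) := svalP (boolp.cid (hb k)).
  pose al : {linear 'rV[R]_n -> 'rV[R]_np} := combf fa.
  pose be : {linear 'rV[R]_np -> 'rV[R]_n} := combf fb.
  have f1 y : phi (be y) = h (fF y).
    have -> : phi (be y) = (phi \o be) y by [].
    have -> : h (fF y) = (h \o fF) y by [].
    rewrite (lin_delta (phi \o be)) (lin_delta (h \o fF)); apply: eq_bigr => k _.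
    by rewrite /= combf_delta fbP.
  have f2 x : h (fF (al x)) = s *: phi x.
    have -> : h (fF (al x)) = (h \o fF \o al) x by [].
    rewrite (lin_delta (h \o fF \o al)) (lin_delta phi) scaler_sumr; apply: eq_bigr => j _.
    by rewrite /= !combf_delta faP scalerA mulrC -scalerA.
  pose D x := s *: x - be (al x).
  have phiD x : phi (D x) = 0 by rewrite linearB linearZ_LR f1 f2 subrr.
  have eD x : D x = \sum_j x 0 j *: D (delta_mx 0 j).
    rewrite /D {1}(row_sum_delta x).
    have -> : be (al x) = (be \o al) x by [].
    rewrite (lin_delta (be \o al)) scaler_sumr -sumrB; apply: eq_bigr => j _.
    by rewrite /= scalerBr !scalerA mulrC.
  exists (map (fun j => D (delta_mx 0 j)) (index_enum 'I_n) ++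
          map (fun k => be (gF (delta_mx 0 k))) (index_enum 'I_mp)); split.
    move=> y /spn_cat [y1 [y2 [s1 [s2 ->]]]].
    rewrite linearD (spn_map_ker (L := phi) _ s1) ?(spn_map_ker (L := phi) _ s2) ?addr0 //.
    move=> k /=; rewrite f1.
    have : fF (gF (delta_mx 0 k)) = 0 by apply/exF; exists (delta_mx 0 k).
    by move=> ->; rewrite !linear0.
  move=> x x0; apply/spn_cat.
  exists (s *: D x), (be (s *: al x)); split.
    by apply: spnZ; rewrite eD; exact: spn_sum_ord.
  split; last by rewrite linearZ_LR /D scalerBr scalerA subrK.
  have : fF (s *: al x) = 0.
    have : h (fF (al x)) = 0 by rewrite f2 x0 scaler0.
    move=> /exih [t it]; rewrite linearZ_LR -it -linearZ_LR k1 linear0 //.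
  move=> /exF [z gz]; rewrite -gz.
  have -> : be (gF z) = (be \o gF) z by [].
  rewrite (lin_delta (be \o gF)).
  exact: (spn_sum_ord (fun k => be (gF (delta_mx 0 k))) (fun k => z 0 k)).
exists n, (size ws), (combf (fun k : 'I_(size ws) => ws`_k) : {linear _ -> _}), phi.
split=> //.
move=> y; split.
  by move=> /wsP; rewrite scale1r => /spn_combf.
by move=> /spn_combf; apply: wsK.
Qed.

End Main.

Lemma fwd (R : comPzRingType) (M : lmodType R) (S : R -> Prop) :
  S 1 -> fin_presented M -> u_fin_presented S M.
Proof.
move=> S1 fp.
exists 1, 'rV[R]_0, M, 'rV[R]_0, (zerof _ : {linear 'rV[R]_0 -> M}),
  (idfun : {linear M -> M}), (zerof _ : {linear M -> 'rV[R]_0}).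
split=> //; split=> //; split; first by move=> t _; exact: thinmx0.
split; first by move=> y /=; split=> [->|[x <-]]; [by exists 0 | by []].
split; first by move=> y /=; split=> [_|//]; by exists y.
split; first by move=> z; exists 0; rewrite (thinmx0 z).
by split=> t; exact: thinmx0.
Qed.

Theorem proposition2p6 (R : comPzRingType) (M : lmodType R) :
  (fin_presented M <->
     (forall P : R -> Prop, prime_ideal P -> u_fin_presented (fun r => ~ P r) M)) /\
  (fin_presented M <->
     (forall Mx : R -> Prop, maximal_ideal Mx -> u_fin_presented (fun r => ~ Mx r) M)).
Proof.
split; split.
- by move=> fp P [_ P1 _]; apply: fwd.
- by move=> H; apply: back => Mx mMx; apply: H; exact: max_prime.
- by move=> fp Mx [_ M1 _]; apply: fwd.
- exact: back.
Qed.
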